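(* Let $h,k$ be positive integers with $\gcd(h,k)=1$ and $h+k$ odd. Then $$Y_{1}(h,k)+Y_{1}(k,h)=2(k-1)B_{1}(h,k)+2(h-1)B_{1}(k,h).$$
   Context: $[x]$ denotes the greatest integer $\le x$. For coprime positive integers $a,b$ define $$B_{1}(a,b)=\sum_{j=1}^{b-1}(-1)^{j+\left[\frac{aj}{b}\right]}\left[\frac{aj}{b}\right],\qquad Y_{1}(a,b)=\sum_{j=1}^{b-1}(2j-1)(-1)^{j+\left[\frac{aj}{b}\right]}\left[\frac{aj}{b}\right].$$ *)

(* Defs.v *)
From mathcomp Require Import all_boot all_order all_algebra.
Set Implicit Arguments. Unset Strict Implicit. Unset Printing Implicit Defensive.
Import Order.TTheory GRing.Theory Num.Theory.
Local Open Scope ring_scope.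

Definition B1 (a b : nat) : int :=
  \sum_(1 <= j < b) (-1) ^+ (j + (a * j) %/ b)%N * ((a * j) %/ b)%:Z.

Definition Y1 (a b : nat) : int :=
  \sum_(1 <= j < b) (2 * j%:Z - 1) * (-1) ^+ (j + (a * j) %/ b)%N
                      * ((a * j) %/ b)%:Z.

(* Main.v *)
Require Import Defs.
From mathcomp Require Import all_boot all_order all_algebra.
From mathcomp Require Import zify ring lra.
Import Order.TTheory GRing.Theory Num.Theory.
Local Open Scope ring_scope.

Lemma sum_pick (F : nat -> int) x n : (x < n)%N ->
  \sum_(0 <= a < n) (if a == x then F a else 0) = F x.
Proof.
elim: n => // n IH Hx; rewrite big_nat_recr //=.
case: (ltngtP x n) Hx => [Hxn _|Hnx H|-> _].
- by rewrite IH // addr0.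
- lia.
- rewrite big1_seq ?add0r // => i; rewrite mem_index_iota => Hi.
  by rewrite ifF //; apply/negbTE; lia.
Qed.

Lemma tele (u : nat -> int) l d :
  \sum_(l.+1 <= i < (l + d).+1) (u i - u i.-1) = u (l + d)%N - u l.
Proof.
elim: d => [|d IH]; first by rewrite addn0 big_geq // subrr.
rewrite addnS big_nat_recr /=; last by lia.
by rewrite IH addrC addrA subrK.
Qed.

Lemma window (G : nat -> int) l r n : (l <= r)%N -> (r < n)%N ->
  \sum_(1 <= i < n) (if (l < i <= r)%N then G i else 0) = \sum_(l.+1 <= i < r.+1) G i.
Proof.
move=> Hlr Hrn.
have E1 : \sum_(1 <= i < l.+1) (if (l < i <= r)%N then G i else 0) = 0.
  by rewrite big_nat_cond big1 // => i /andP[Hi _]; rewrite ifF //; apply/negbTE; lia.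
have E3 : \sum_(r.+1 <= i < n) (if (l < i <= r)%N then G i else 0) = 0.
  by rewrite big_nat_cond big1 // => i /andP[Hi _]; rewrite ifF //; apply/negbTE; lia.
have E2 : \sum_(l.+1 <= i < r.+1) (if (l < i <= r)%N then G i else 0) = \sum_(l.+1 <= i < r.+1) G i.
  by apply: eq_big_nat => i Hi; rewrite ifT //; lia.
rewrite (@big_cat_nat _ _ _ l.+1 1 n); try lia.
rewrite (@big_cat_nat _ _ _ r.+1 l.+1 n); try lia.
by rewrite /= E1 E2 E3 add0r addr0.
Qed.

Lemma symq a b j : (0 < a)%N -> (0 < b)%N -> coprime a b -> (0 < j < b)%N ->
  ((a * (b - j)) %/ b = a - 1 - (a * j) %/ b)%N.
Proof.
move=> Ha Hb Hab Hj.
set q := ((a * j) %/ b)%N; set r := ((a * j) %% b)%N.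
have E : (a * j = q * b + r)%N by apply: divn_eq.
have Hr : (0 < r)%N.
  rewrite lt0n; apply/negP => /eqP Hr0.
  have : (b %| a * j)%N by rewrite /dvdn -/r Hr0.
  rewrite Gauss_dvdr; last by rewrite coprime_sym.
  by move/(dvdn_leq (_ : 0 < j)%N); lia.
have Hrb : (r < b)%N by apply: ltn_pmod.
have Hq : (q < a)%N by rewrite ltn_divLR // ltn_pmul2l; lia.
have E2 : (a * (b - j) = (a - 1 - q) * b + (b - r))%N by nia.
rewrite E2 divnMDl // divn_small ?addn0 //; lia.
Qed.

Lemma symsg a b j : (0 < a)%N -> (0 < b)%N -> coprime a b -> odd (a + b) -> (0 < j < b)%N ->
  (-1) ^+ ((b - j) + (a * (b - j)) %/ b)%N = (-1) ^+ (j + (a * j) %/ b)%N :> int.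
Proof.
move=> Ha Hb Hab Hodd Hj; rewrite symq //.
have Hq : ((a * j) %/ b < a)%N by rewrite ltn_divLR // ltn_pmul2l; lia.
rewrite -signr_odd -[RHS]signr_odd; congr (_ ^+ _).
set q := ((a * j) %/ b)%N.
have -> : (b - j + (a - 1 - q) = (a + b) - 1 - (j + q))%N by lia.
have : (j + q <= (a + b) - 1)%N by lia.
move: (j + q)%N => x Hx.
rewrite oddB // oddB; last by lia.
by rewrite Hodd.
Qed.

Definition Ssum (a b : nat) : int := \sum_(1 <= j < b) (-1) ^+ (j + (a * j) %/ b)%N.
Definition Tsum (a b : nat) : int :=
  \sum_(1 <= j < b) (2 * j%:Z - 1) * (-1) ^+ (j + (a * j) %/ b)%N.

Lemma natz_sub3 a q : (q < a)%N -> ((a - 1 - q)%N : int) = a%:Z - 1 - q%:Z.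
Proof.
move=> H; have E : a = ((a - 1 - q) + q + 1)%N by lia.
by rewrite [in RHS]E !PoszD; ring.
Qed.

Lemma symB a b : (0 < a)%N -> (0 < b)%N -> coprime a b -> odd (a + b) ->
  2 * B1 a b = (a%:Z - 1) * Ssum a b.
Proof.
move=> Ha Hb Hab Hodd.
have R : B1 a b = \sum_(1 <= j < b)
   (-1) ^+ (j + (a * j) %/ b)%N * ((a%:Z - 1) - ((a * j) %/ b)%N%:Z).
  rewrite /B1 big_nat_rev; apply: eq_big_nat => j Hj.
  have -> : (1 + b - j.+1 = b - j)%N by lia.
  have Hq : ((a * j) %/ b < a)%N by rewrite ltn_divLR // ltn_pmul2l; lia.
  by rewrite symsg // symq // natz_sub3.
rewrite mulr2n mulrDl mul1r {2}R /B1 -big_split /= /Ssum mulr_sumr.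
by apply: eq_bigr => j _; ring.
Qed.

Lemma symT a b : (0 < a)%N -> (0 < b)%N -> coprime a b -> odd (a + b) ->
  Tsum a b = (b%:Z - 1) * Ssum a b.
Proof.
move=> Ha Hb Hab Hodd.
have R : Tsum a b = \sum_(1 <= j < b)
   (2 * (b%:Z - j%:Z) - 1) * (-1) ^+ (j + (a * j) %/ b)%N.
  rewrite /Tsum big_nat_rev; apply: eq_big_nat => j Hj.
  have -> : (1 + b - j.+1 = b - j)%N by lia.
  by rewrite symsg // subzn //; lia.
apply: (@mulfI _ 2) => //.
rewrite mulr2n mulrDl mul1r {2}R /Tsum -big_split /= /Ssum !mulr_sumr.
by apply: eq_bigr => j _; ring.
Qed.

Lemma tele2 h k (P : nat -> nat -> int) : (0 < h)%N -> (0 < k)%N -> coprime h k ->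
  \sum_(1 <= j < k) (P j ((h * j) %/ k)%N - P j.-1 ((h * j) %/ k)%N)
  + \sum_(1 <= i < h) (P ((k * i) %/ h)%N i - P ((k * i) %/ h)%N i.-1)
  = P k.-1 h.-1 - P 0%N 0%N.
Proof.
move=> Hh Hk Hhk.
pose f a := ((h * a) %/ k)%N.
pose g i := ((k * i) %/ h)%N.
pose m a := minn (f a.+1) h.-1.
have Hg : forall i, (i < h)%N -> (g i < k)%N.
  by move=> i Hi; rewrite /g ltn_divLR //; nia.
have Hf : forall a, (a < k)%N -> (f a < h)%N.
  by move=> a Ha; rewrite /f ltn_divLR //; nia.
have Hnd : forall c i, (0 < i < h)%N -> (k * i)%N <> (h * c)%N.
  move=> c i Hi E.
  have : (h %| k * i)%N by rewrite E dvdn_mulr.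
  rewrite Gauss_dvdr // => /(dvdn_leq (_ : 0 < i)%N); lia.
have Hind : forall a i, (a < k)%N -> (0 < i < h)%N -> (g i == a) = (f a < i <= m a)%N.
  move=> a i Ha Hi.
  have N1 := Hnd a i Hi; have N2 := Hnd a.+1 i Hi.
  rewrite /m leq_min /g /f ltn_divLR // leq_divRL //.
  apply/eqP/idP.
  - move=> E; have H1 := leq_divM (k * i) h; have H2 := ltn_ceil (k * i) Hh.
    rewrite E in H1 H2; apply/andP; split; [|apply/andP; split]; lia.
  - move=> /andP[H1 /andP[H2 H3]]; apply/eqP; rewrite eqn_leq.
    rewrite leq_divRL // -ltnS ltn_divLR //; apply/andP; split; lia.
have Hfm : forall a, (a < k)%N -> (f a <= m a)%N.
  move=> a Ha; rewrite /m leq_min; apply/andP; split.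
    by rewrite /f leq_div2r // leq_mul2l ltnW ?orbT.
  by have := Hf a Ha; lia.
have Step1 : \sum_(1 <= i < h) (P (g i) i - P (g i) i.-1)
           = \sum_(0 <= a < k) (P a (m a) - P a (f a)).
  transitivity (\sum_(1 <= i < h) \sum_(0 <= a < k)
                 (if a == g i then P a i - P a i.-1 else 0)).
    apply: eq_big_nat => i Hi.
    by rewrite (sum_pick (fun a => P a i - P a i.-1)) //; apply: Hg; lia.
  rewrite exchange_big_nat; apply: eq_big_nat => a Ha.
  transitivity (\sum_(1 <= i < h) (if (f a < i <= m a)%N then P a i - P a i.-1 else 0)).
    apply: eq_big_nat => i Hi; rewrite eq_sym Hind //; lia.
  rewrite window; [|apply: Hfm; lia|rewrite /m; lia].
  have T := tele (fun i => P a i) (f a) (m a - f a).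
  rewrite subnKC in T; last by apply: Hfm; lia.
  exact: T.
rewrite Step1.
have Gen : forall n, (0 < n <= k)%N ->
   \sum_(1 <= j < n) (P j (f j) - P j.-1 (f j))
   + \sum_(0 <= a < n) (P a (m a) - P a (f a)) = P n.-1 (m n.-1) - P 0%N 0%N.
  elim=> [//|n IH] Hn.
  case: n IH Hn => [_ _|n IH Hn].
    rewrite big_geq // big_nat1 add0r /f muln0 div0n; ring.
  rewrite big_nat_recr // [X in _ + X]big_nat_recr //=.
  rewrite addrACA IH; last by lia.
  have -> : m n = f n.+1 by rewrite /m; apply/minn_idPl; have := Hf n.+1; lia.
  ring.
rewrite Gen; last by lia.
have -> : m k.-1 = h.-1.
  rewrite /m prednK // /f mulnK //; apply/minn_idPr; lia.
by [].
Qed.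

Definition Ph (k : nat) (a b : nat) : int :=
  (-1) ^+ (a + b)%N * (a%:Z * b%:Z + (1 - k%:Z) * b%:Z).

Lemma stepJ k j f : (0 < j)%N ->
  Ph k j f - Ph k j.-1 f = (2 * j%:Z - 1) * (-1) ^+ (j + f)%N * f%:Z
                          - 2 * (k%:Z - 1) * ((-1) ^+ (j + f)%N * f%:Z).
Proof.
case: j => // j _; rewrite /Ph /= addSn exprS -[(j.+1)%N]addn1 PoszD; ring.
Qed.

Lemma stepI k a i : (0 < i)%N ->
  Ph k a i - Ph k a i.-1 = (2 * i%:Z - 1) * (-1) ^+ (i + a)%N * a%:Z
                          + (1 - k%:Z) * ((2 * i%:Z - 1) * (-1) ^+ (i + a)%N).
Proof.
case: i => // i _; rewrite /Ph /= (addnC i.+1) addnS exprS -[(i.+1)%N]addn1 PoszD; ring.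
Qed.

Theorem theorem16 (h k : nat) :
  (0 < h)%N -> (0 < k)%N -> coprime h k -> odd (h + k) ->
  Y1 h k + Y1 k h = 2 * (k%:Z - 1) * B1 h k + 2 * (h%:Z - 1) * B1 k h.
Proof.
move=> Hh Hk Hhk Hodd.
have T := @tele2 h k (Ph k) Hh Hk Hhk.
have E0 : Ph k k.-1 h.-1 - Ph k 0%N 0%N = 0.
  rewrite /Ph; case: (k) Hk => // k' _; case: (h) Hh => // h' _.
  rewrite /= -[(k'.+1)%N]addn1 PoszD; ring.
rewrite E0 in T.
have EJ : \sum_(1 <= j < k) (Ph k j ((h * j) %/ k)%N - Ph k j.-1 ((h * j) %/ k)%N)
        = Y1 h k - 2 * (k%:Z - 1) * B1 h k.
  rewrite /Y1 /B1 mulr_sumr -sumrB; apply: eq_big_nat => j Hj.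
  by rewrite stepJ //; lia.
have EI : \sum_(1 <= i < h) (Ph k ((k * i) %/ h)%N i - Ph k ((k * i) %/ h)%N i.-1)
        = Y1 k h + (1 - k%:Z) * Tsum k h.
  rewrite /Y1 /Tsum mulr_sumr -big_split; apply: eq_big_nat => i Hi.
  by rewrite stepI //; lia.
rewrite EJ EI in T.
have Hkh : coprime k h by rewrite coprime_sym.
have Ho : odd (k + h) by rewrite addnC.
have HT := @symT k h Hk Hh Hkh Ho.
have HB := @symB k h Hk Hh Hkh Ho.
rewrite HT in T.
have -> : 2 * (h%:Z - 1) * B1 k h = (h%:Z - 1) * (2 * B1 k h) by ring.
rewrite HB.
apply/eqP; rewrite -subr_eq0; apply/eqP; rewrite -T; ring.
Qed.
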